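(* Let $T$ be a $P$-Petri net, let $\rho$ be a $P$-configuration, let $Q\subseteq P$ be such that $\rho|_Q$ is $T|_Q$-bottom, let $s$ be the cardinality of the $T|_Q$-component of $\rho|_Q$, and let $d=|P\setminus Q|$. There exist a word $\sigma\in T^*$ with $|\sigma|\leq(1+d(1+s\|T\|_\infty+\|\rho\|_\infty)^{d^d})s$ and a $P$-configuration $\rho'$ with $\rho\xrightarrow{\sigma}\rho'$ such that either (1) $\rho'|_Q=\rho|_Q$ and $\rho'(p)>\rho(p)$ for every $p\in P\setminus Q$, or (2) there exists a set $Q'\subseteq P$ strictly containing $Q$ such that $\rho'|_{Q'}$ is $T|_{Q'}$-bottom and the cardinality $s'$ of the $T|_{Q'}$-component of $\rho'|_{Q'}$ satisfies $s'\leq(1+d(1+s\|T\|_\infty+\|\rho\|_\infty)^{d^d})s$.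
   Context: A $P$-configuration is a map in $\mathbb{N}^P$, $\|\rho\|_\infty=\max_p\rho(p)$. For a finite set $Q$, $\rho|_Q$ is the $Q$-configuration with $\rho|_Q(q)=\rho(q)$ if $q\in P$ and $0$ otherwise. A $P$-Petri net $T$ is a finite set of transitions $t=(\alpha_t,\beta_t)$ (pairs of $P$-configurations); $\alpha\xrightarrow{t}\beta$ iff $\alpha=\alpha_t+\gamma$, $\beta=\beta_t+\gamma$ for some configuration $\gamma$; for a word $\sigma=t_1\cdots t_k$ ($|\sigma|=k$), $\xrightarrow{\sigma}$ is the composition; $\alpha\xrightarrow{T^*}\beta$ iff $\alpha\xrightarrow{\sigma}\beta$ for some $\sigma\in T^*$. $\|T\|_\infty$ is the maximum entry among all $\alpha_t,\beta_t$, $t\in T$. $t|_Q=(\alpha_t|_Q,\beta_t|_Q)$ and $T|_Q=\{t|_Q\mid t\in T\}$. The $T$-component of $\rho$ is the set of $\beta$ with $\rho\xrightarrow{T^*}\beta\xrightarrow{T^*}\rho$; $\rho$ is $T$-bottom if its $T$-component is finite and every $\beta$ with $\rho\xrightarrow{T^*}\beta$ satisfies $\beta\xrightarrow{T^*}\rho$. *)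

(* Defs.v *)
From mathcomp Require Import all_boot.
Set Implicit Arguments. Unset Strict Implicit. Unset Printing Implicit Defensive.

Section PetriDefs.
Variable P : finType.

Definition conf := {ffun P -> nat}.
Definition trans := (conf * conf)%type.
Definition net := seq trans.

Definition cnorm (r : conf) : nat := \max_(p : P) r p.
Definition tnorm (T : net) : nat :=
  \max_(t <- T) maxn (cnorm t.1) (cnorm t.2).

Definition step (t : trans) (a b : conf) : Prop :=
  exists g : conf, a = [ffun p => t.1 p + g p] /\ b = [ffun p => t.2 p + g p].

Fixpoint run (s : seq trans) (a b : conf) : Prop :=
  match s with
  | [::] => a = b
  | t :: s' => exists c, step t a c /\ run s' c b
  end.

Definition word_in (T : net) (s : seq trans) : bool := all (fun t => t \in T) s.

Definition reach (T : net) (a b : conf) : Prop :=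
  exists s, word_in T s /\ run s a b.

Definition in_component (T : net) (r b : conf) : Prop := reach T r b /\ reach T b r.

Definition component_card (T : net) (r : conf) (n : nat) : Prop :=
  exists l : seq conf, uniq l /\ size l = n /\
    (forall b, b \in l <-> in_component T r b).

Definition component_finite (T : net) (r : conf) : Prop :=
  exists n, component_card T r n.

Definition bottom (T : net) (r : conf) : Prop :=
  component_finite T r /\ (forall b, reach T r b -> reach T b r).

(* restriction of a configuration / net to Q, realised as P-configurations
   that vanish outside Q *)
Definition restr (Q : {set P}) (r : conf) : conf :=
  [ffun p => if p \in Q then r p else 0].
Definition restrT (Q : {set P}) (T : net) : net :=
  [seq (restr Q t.1, restr Q t.2) | t <- T].

End PetriDefs.

(* Main.v *)
Require Import Defs.
From mathcomp Require Import all_boot zify.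
From Stdlib Require Import ClassicalEpsilon Classical.
Set Implicit Arguments. Unset Strict Implicit. Unset Printing Implicit Defensive.

Definition en (P : finType) (t : trans P) (a : conf P) := [forall p, t.1 p <= a p].
Definition fire (P : finType) (t : trans P) (a : conf P) : conf P :=
  [ffun p => a p - t.1 p + t.2 p].
Fixpoint ok (P : finType) (sg : seq (trans P)) (a : conf P) : bool :=
  if sg is t :: sg' then en t a && ok sg' (fire t a) else true.
Definition fires (P : finType) (sg : seq (trans P)) (a : conf P) :=
  foldl (fun c t => fire t c) a sg.

Lemma stepE (P : finType) (t : trans P) a b : step t a b <-> en t a /\ b = fire t a.
Proof.
split.
- case=> g [-> ->]; split.
  + apply/forallP=> p; rewrite ffunE; exact: leq_addr.
  + apply/ffunP=> p; rewrite !ffunE; lia.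
- move=> [/forallP H ->]; exists [ffun p => a p - t.1 p]; split; apply/ffunP=> p;
  rewrite !ffunE; have := H p; lia.
Qed.

Lemma runE (P : finType) (sg : seq (trans P)) a b :
  run sg a b <-> ok sg a /\ fires sg a = b.
Proof.
elim: sg a => [|t sg IH] a /=; first by split; [move=> ->|case].
split.
- case=> c [/stepE [He ->] /IH [Ho Hf]]; by rewrite He Ho.
- case=> /andP [He Ho] Hf; exists (fire t a); split; first by apply/stepE.
  exact/IH.
Qed.

Lemma fires_cat (P : finType) (s1 s2 : seq (trans P)) a :
  fires (s1 ++ s2) a = fires s2 (fires s1 a).
Proof. by rewrite /fires foldl_cat. Qed.

Lemma ok_cat (P : finType) (s1 s2 : seq (trans P)) a :
  ok (s1 ++ s2) a = ok s1 a && ok s2 (fires s1 a).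
Proof. by elim: s1 a => [|t s1 IH] a //=; rewrite IH andbA. Qed.

Lemma ok_take (P : finType) (sg : seq (trans P)) a i : ok sg a -> ok (take i sg) a.
Proof. by rewrite -{1}(cat_take_drop i sg) ok_cat => /andP []. Qed.

Lemma pigeon_short (P : finType) (l : seq (conf P)) n : forall (sg : seq (trans P)) a,
  size sg <= n -> ok sg a ->
  (forall i, i <= size sg -> fires (take i sg) a \in l) ->
  exists sg', {subset sg' <= sg} /\ ok sg' a /\ fires sg' a = fires sg a /\ size sg' < size l.
Proof.
elim: n => [|n IH] sg a Hn Hok Hin.
  have := Hin 0 (leq0n _); rewrite take0 => Hl.
  exists sg; split => //; split => //; split => //.
  have Hsg : sg = [::] by case: sg Hn {Hok Hin Hl}.
  rewrite Hsg.
  by case: l Hl {Hin}.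
case: (ltnP (size sg) (size l)) => Hs; first by exists sg; split => //; split.
set cs := [seq fires (take i sg) a | i <- iota 0 (size sg).+1].
have : ~~ uniq cs.
  apply/negP => U; have := uniq_leq_size U.
  have Hsub : {subset cs <= l}.
    by move=> x /mapP [i]; rewrite mem_iota => /andP [_ Hi] ->; apply: Hin.
  move=> /(_ l Hsub); rewrite /cs size_map size_iota. idtac.
  move=> HH; move: HH Hs => H1 H2; have := leq_trans H1 H2; by rewrite ltnn.
case/(uniqPn a) => i [j [Hij Hj]].
rewrite /cs size_map size_iota in Hj.
rewrite /cs !(nth_map 0) ?size_iota // ?(ltn_trans Hij Hj) // !nth_iota ?(ltn_trans Hij Hj) //.
rewrite !add0n => Heq.
have Hjs : j <= size sg by [].
have Hi : i <= size sg by lia.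
have Hok' := Hok; rewrite -(cat_take_drop j sg) ok_cat in Hok'; case/andP: Hok' => _ Hokd.
have Hf : fires sg a = fires (drop j sg) (fires (take i sg) a)
  by rewrite Heq -fires_cat cat_take_drop.
have Hsz : size (take i sg ++ drop j sg) = i + (size sg - j)
  by rewrite size_cat size_drop size_takel.
case: (IH (take i sg ++ drop j sg) a).
- rewrite Hsz; lia.
- by rewrite ok_cat (ok_take _ Hok) Heq Hokd.
- move=> m; rewrite Hsz => Hm.
  rewrite take_cat size_takel //.
  case: ifP => Hmi.
    rewrite take_takel; [apply: Hin | ]; lia.
  rewrite fires_cat Heq -fires_cat -takeD; apply: Hin; lia.
- move=> sg' [Hsub [Ho [Hf' Hs']]]; exists sg'; split; last first.
    by split => //; split => //; rewrite Hf' Hf fires_cat.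
  move=> x /Hsub; rewrite mem_cat => /orP [/mem_take|/mem_drop] //.
Qed.
Definition rt (P : finType) (W : {set P}) (t : trans P) : trans P :=
  (restr W t.1, restr W t.2).

Lemma restr_restr (P : finType) (W W' : {set P}) a : W' \subset W ->
  restr W' (restr W a) = restr W' a.
Proof.
move=> /subsetP H; apply/ffunP => p; rewrite !ffunE.
by case: ifP => // /H ->.
Qed.

Lemma restr_setT (P : finType) (a : conf P) : restr setT a = a.
Proof. by apply/ffunP => p; rewrite ffunE in_setT. Qed.

Lemma map_rt_setT (P : finType) (sg : seq (trans P)) : map (rt setT) sg = sg.
Proof. by elim: sg => [|[t1 t2] sg IH] //=; rewrite IH /rt /= !restr_setT. Qed.

Lemma restrT_setT (P : finType) (T : net P) : restrT setT T = T.
Proof. exact: map_rt_setT. Qed.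

Lemma en_restr (P : finType) (W W' : {set P}) t a : W' \subset W ->
  en (rt W t) a -> en (rt W' t) (restr W' a).
Proof.
move=> /subsetP H /forallP He; apply/forallP => p; have := He p.
rewrite /rt /= !ffunE; case HW': (p \in W') => //.
by rewrite (H _ HW').
Qed.

Lemma fire_restr (P : finType) (W W' : {set P}) t a : W' \subset W ->
  restr W' (fire (rt W t) a) = fire (rt W' t) (restr W' a).
Proof.
move=> /subsetP H; apply/ffunP => p; rewrite /rt /= !ffunE.
by case: ifP => // /H ->.
Qed.

Lemma ok_restr (P : finType) (W W' : {set P}) sg a : W' \subset W ->
  ok (map (rt W) sg) a -> ok (map (rt W') sg) (restr W' a) /\
  restr W' (fires (map (rt W) sg) a) = fires (map (rt W') sg) (restr W' a).
Proof.
move=> H; elim: sg a => [|t sg IH] a //= /andP [He Ho].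
rewrite (en_restr H He) /=.
have [Ho' Hf] := IH _ Ho; rewrite fire_restr // in Ho' Hf; split => //.
Qed.

Lemma fires_supp (P : finType) (W : {set P}) sg a : restr W a = a ->
  restr W (fires (map (rt W) sg) a) = fires (map (rt W) sg) a.
Proof.
elim: sg a => [|t sg IH] a //= Ha.
rewrite /fires /= -/(fires _ _); apply: IH.
by rewrite fire_restr // Ha.
Qed.

Lemma tnorm_le (P : finType) (T : net P) (t : trans P) (p : P) : t \in T ->
  t.1 p <= tnorm T /\ t.2 p <= tnorm T.
Proof.
move=> Ht.
have H := @leq_bigmax_seq _ T xpredT (fun t : trans P => maxn (cnorm t.1) (cnorm t.2)) t Ht isT.
rewrite /tnorm; split; apply: leq_trans H; rewrite leq_max; apply/orP;
  [left|right]; exact: (@leq_bigmax _ (fun p => _) p).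
Qed.

Lemma cnorm_le (P : finType) (r : conf P) p : r p <= cnorm r.
Proof. exact: (@leq_bigmax _ (fun p => r p) p). Qed.

Lemma word_map (P : finType) (T : net P) (W : {set P}) sg :
  word_in T sg -> word_in (restrT W T) (map (rt W) sg).
Proof.
elim: sg => [|t sg IH] //= /andP [Ht Hs]; rewrite IH // andbT.
exact: (map_f (rt W)).
Qed.

Lemma word_unmap (P : finType) (T : net P) (W : {set P}) sw :
  word_in (restrT W T) sw -> exists sg, word_in T sg /\ sw = map (rt W) sg.
Proof.
elim: sw => [|t sw IH] /=; first by exists [::].
case/andP => /mapP [t0 Ht0 ->] /IH [sg [Hsg ->]].
by exists (t0 :: sg); rewrite /= Ht0 Hsg.
Qed.

Lemma lift (P : finType) (T : net P) (W W' : {set P}) sg a :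
  W' \subset W -> restr W a = a -> word_in T sg ->
  ok (map (rt W') sg) (restr W' a) ->
  (forall p, p \in W -> p \notin W' -> tnorm T * size sg <= a p) ->
  ok (map (rt W) sg) a /\
  (forall p, p \in W -> p \notin W' -> a p <= fires (map (rt W) sg) a p + tnorm T * size sg).
Proof.
move=> HW; elim: sg a => [|t sg IH] a Ha.
  by move=> _ _ _; split => // p _ _; rewrite muln0 addn0.
move=> /= /andP [Ht Hw] /andP [He Ho] Hb.
have Hen : en (rt W t) a.
  apply/forallP => p; rewrite /rt /= ffunE; case: ifP => // HpW.
  case HpW': (p \in W').
    by move/forallP: He => /(_ p); rewrite /rt /= !ffunE HpW'.
  have := Hb p HpW (negbT HpW'); have := tnorm_le p Ht; move=> [H1 _].
  rewrite mulnS; lia.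
have Ha' : restr W (fire (rt W t) a) = fire (rt W t) a by rewrite fire_restr // Ha.
have Ho' : ok (map (rt W') sg) (restr W' (fire (rt W t) a)) by rewrite fire_restr.
have Hb' : forall p, p \in W -> p \notin W' -> tnorm T * size sg <= fire (rt W t) a p.
  move=> p HpW HpW'; have := Hb p HpW HpW'; have := tnorm_le p Ht; move=> [H1 _].
  rewrite /rt /= !ffunE HpW mulnS; move: (tnorm T * size sg) => m; lia.
have [IHo IHb] := IH _ Ha' Hw Ho' Hb'.
rewrite Hen IHo; split => // p HpW HpW'.
rewrite /fires /= -/(fires _ _).
have := IHb p HpW HpW'; have := tnorm_le p Ht; move=> [H1 _].
rewrite /rt /= !ffunE HpW mulnS; move: (tnorm T * size sg) => m; lia.
Qed.
Definition pb (A : Prop) : bool := if excluded_middle_informative A then true else false.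
Lemma pbP (A : Prop) : reflect A (pb A).
Proof. rewrite /pb; case: excluded_middle_informative => H; by constructor. Qed.

Lemma reach_refl (P : finType) (N : net P) a : reach N a a.
Proof. by exists [::]. Qed.

Lemma reach_trans (P : finType) (N : net P) a b c : reach N a b -> reach N b c -> reach N a c.
Proof.
move=> [s1 [H1 /runE [O1 F1]]] [s2 [H2 /runE [O2 F2]]].
exists (s1 ++ s2); split; first by rewrite /word_in all_cat; apply/andP.
by apply/runE; rewrite ok_cat fires_cat O1 F1 O2 F2.
Qed.

Lemma word_take (P : finType) (N : net P) sg i : word_in N sg -> word_in N (take i sg).
Proof. by rewrite -{1}(cat_take_drop i sg) /word_in all_cat => /andP []. Qed.

Lemma prefix_reach (P : finType) (N : net P) sg a i : word_in N sg -> ok sg a ->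
  reach N a (fires (take i sg) a).
Proof.
move=> Hw Ho; exists (take i sg); split; first exact: word_take.
by apply/runE; rewrite ok_take.
Qed.

Lemma short_reach (P : finType) (N : net P) (l : seq (conf P)) a b :
  (forall z, reach N a z -> z \in l) -> reach N a b ->
  exists sg, word_in N sg /\ run sg a b /\ size sg < size l.
Proof.
move=> Hl [sg [Hw /runE [Ho Hf]]].
have [sg' [Hs [Ho' [Hf' Hsz]]]] := pigeon_short (leqnn (size sg)) Ho
  (fun i _ => Hl _ (prefix_reach i Hw Ho)).
exists sg'; split; last by split => //; apply/runE; rewrite Hf' Hf.
by apply/allP => t /Hs; move/allP: Hw; apply.
Qed.

Lemma bottom_exists (P : finType) (N : net P) (l : seq (conf P)) x :
  (forall z, reach N x z -> z \in l) ->
  exists y, reach N x y /\ (forall z, reach N y z -> reach N z y).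
Proof.
move=> Hl.
pose cnt y := count (fun z => pb (reach N y z)) (undup l).
have Hex : exists n, pb (exists y, reach N x y /\ cnt y = n).
  by exists (cnt x); apply/pbP; exists x; split => //; apply: reach_refl.
case: (ex_minnP Hex) => m /pbP [y [Hxy Hcy]] Hmin.
exists y; split => // z Hyz.
have Hxz := reach_trans Hxy Hyz.
have Hm : m <= cnt z by apply: Hmin; apply/pbP; exists z.
have Hsub : forall w, pb (reach N z w) -> pb (reach N y w).
  by move=> w /pbP H; apply/pbP; apply: reach_trans Hyz H.
have Heq : count (fun w => pb (reach N y w) && ~~ pb (reach N z w)) (undup l) = 0.
  have H1 := count_predUI (fun w => pb (reach N z w)) (fun w => pb (reach N y w) && ~~ pb (reach N z w)) (undup l).
  have E1 : count (predI (fun w => pb (reach N z w)) (fun w => pb (reach N y w) && ~~ pb (reach N z w))) (undup l) = 0.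
    by apply/eqP; rewrite -leqn0 leqNgt -has_count; apply/hasPn => w _ /=; case: (pb (reach N z w)); rewrite ?andbF.
  have E2 : count (predU (fun w => pb (reach N z w)) (fun w => pb (reach N y w) && ~~ pb (reach N z w))) (undup l) = cnt y.
    apply: eq_count => w /=; case Hz: (pb (reach N z w)) => /=; last by rewrite andbT.
    by rewrite (Hsub _ Hz).
  rewrite E1 E2 addn0 /cnt in H1; rewrite -Hcy /cnt in Hm; lia.
have : y \in undup l by rewrite mem_undup; apply: Hl.
move=> Hyl; apply/pbP; move: Heq => /eqP; rewrite -leqn0 leqNgt -has_count => /hasPn /(_ y Hyl).
by rewrite /= negb_and negbK (introT (pbP _) (reach_refl N y)).
Qed.

Lemma bottom_card (P : finType) (N : net P) (l : seq (conf P)) x y :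
  (forall z, reach N x z -> z \in l) -> reach N x y ->
  (forall z, reach N y z -> reach N z y) ->
  exists n, n <= size l /\ bottom N y /\ component_card N y n.
Proof.
move=> Hl Hxy Hb.
pose lc := [seq z <- undup l | pb (in_component N y z)].
have Hc : component_card N y (size lc).
  exists lc; split; first by rewrite filter_uniq // undup_uniq.
  split => // b; rewrite mem_filter; split; first by case/andP => /pbP.
  move=> Hi; rewrite (introT (pbP _) Hi) mem_undup; apply: Hl.
  exact: reach_trans Hxy (proj1 Hi).
exists (size lc); split.
  rewrite size_filter; apply: leq_trans (count_size _ _) _; exact: size_undup.
by split => //; split => //; exists (size lc).
Qed.
Lemma box_list (P : finType) (Q W : {set P}) (lC : seq (conf P)) (H : nat) :
  exists l : seq (conf P), size l = size lC * H ^ #|W :\: Q| /\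
  forall z : conf P, (forall p, p \notin W -> z p = 0) -> restr Q z \in lC ->
    (forall p, p \in W :\: Q -> z p < H) -> z \in l.
Proof.
pose S := {x : P | x \in W :\: Q}.
pose mk (c : conf P) (f : {ffun S -> 'I_H}) : conf P :=
  [ffun p => if p \in Q then c p else
     if @insub _ (fun x => x \in W :\: Q) S p is Some q then (f q : nat) else 0].
exists [seq mk c f | c <- lC, f <- enum {ffun S -> 'I_H}].
split.
  rewrite size_allpairs -cardE card_ffun card_ord card_sig; congr (_ * _ ^ _).
move=> z Hs Hq Hlt.
have Hf : forall q : S, z (val q) < H by move=> q; apply: Hlt; exact: (valP q).
pose f : {ffun S -> 'I_H} := [ffun q => Ordinal (Hf q)].
have -> : z = mk (restr Q z) f.
  apply/ffunP => p; rewrite !ffunE; case HQ: (p \in Q) => //.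
  case: (insubP S p) => [q Hq' Hval|Hn]; first by rewrite /f ffunE /= Hval.
  apply: Hs; apply/negP => HW; move: Hn; by rewrite !inE HQ HW.
apply: allpairs_f => //; exact: mem_enum.
Qed.
Lemma bern (X k : nat) : 0 < X -> 1 + k * (X - 1) <= X ^ k.
Proof.
move=> HX; elim: k => [|k IH]; first by rewrite expn0.
rewrite expnS.
have : X * (1 + k * (X - 1)) <= X * X ^ k by rewrite leq_mul2l IH orbT.
move: (X ^ k) => Y; nia.
Qed.

Lemma exp_add_ge (a n : nat) : 0 < a -> a ^ n + n <= (a + 1) ^ n.
Proof.
move=> Ha; elim: n => [|n IH]; first by rewrite !expn0.
rewrite !expnS.
have : (a + 1) * (a ^ n + n) <= (a + 1) * (a + 1) ^ n by rewrite leq_mul2l IH orbT.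
have : 0 < a ^ n by rewrite expn_gt0 Ha.
move: (a ^ n) ((a+1) ^ n) => Y Z; nia.
Qed.

Lemma kk_ge (k : nat) : k ^ k + k <= (k + 1) ^ k.
Proof. by case: k => [|k] //; apply: exp_add_ge. Qed.

Lemma kk_gt0 (k : nat) : 0 < k ^ k.
Proof. by case: k => [|k] //; rewrite expn_gt0. Qed.

Lemma arithA (X tau s k : nat) : 1 + s * tau <= X ->
  X + tau * (k * s * X ^ (k ^ k)) <= X ^ ((k + 1) ^ k).
Proof.
move=> HX.
have X0 : 0 < X by lia.
have H1 : X <= X ^ (k ^ k).
  by rewrite -{1}(expn1 X) leq_pexp2l // kk_gt0.
have H2 := bern k X0.
have H3 : X ^ (k ^ k) * X ^ k <= X ^ ((k + 1) ^ k).
  by rewrite -expnD leq_pexp2l // kk_ge.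
have H4 : X ^ (k ^ k) * (1 + k * (X - 1)) <= X ^ (k ^ k) * X ^ k by rewrite leq_mul2l H2 orbT.
apply: leq_trans H3; apply: leq_trans H4.
move: (X ^ (k ^ k)) H1 => Y H1.
have : s * tau <= X - 1 by lia.
move=> H5.
have : tau * (k * s * Y) = k * Y * (s * tau) by rewrite mulnC -!mulnA; congr (_ * _); rewrite mulnC -!mulnA; congr (_ * _); rewrite mulnC.
move=> ->.
have : k * Y * (s * tau) <= k * Y * (X - 1) by rewrite leq_mul2l H5 orbT.
move: (k * Y * (s * tau)) => Z; move: (X - 1) => U; nia.
Qed.

Lemma kk_le (k : nat) : k ^ k <= (k + 1) ^ (k + 1).
Proof.
apply: (@leq_trans ((k + 1) ^ k)).
  by case: k => [|k] //; rewrite leq_exp2r // addn1.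
by rewrite leq_pexp2l // ?addn1.
Qed.

Lemma expH (X k : nat) : (X ^ ((k + 1) ^ k)) ^ (k + 1) = X ^ ((k + 1) ^ (k + 1)).
Proof. by rewrite -expnM !addn1 expnSr. Qed.

Lemma ar1 (a b c : nat) : a <= c -> a + b + 1 <= 1 + b + c.
Proof. lia. Qed.
Lemma ar2 (c X b H a z y : nat) : c <= X -> X + b <= H -> a <= b -> H <= z -> z <= y + a -> c <= y.
Proof. lia. Qed.
Lemma ar3 (a t c y : nat) : a <= t -> c + t + 1 <= y -> a <= y.
Proof. lia. Qed.
Lemma ar4 (a t r y y' : nat) : a <= t -> r + t + 1 <= y -> y <= y' + a -> r < y'.
Proof. lia. Qed.
Lemma Cq_reach (P : finType) (T : net P) (rho : conf P) (Q : {set P}) (lC : seq (conf P)) :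
  (forall c, c \in lC <-> in_component (restrT Q T) (restr Q rho) c) ->
  (forall b, reach (restrT Q T) (restr Q rho) b -> reach (restrT Q T) b (restr Q rho)) ->
  forall c c', c \in lC -> reach (restrT Q T) c c' -> c' \in lC.
Proof.
move=> HC Hbot c c' /HC [H1 H2] H3; apply/HC.
have H4 := reach_trans H1 H3; split => //; exact: Hbot.
Qed.

Lemma good_conf (P : finType) (T : net P) (rho : conf P) (Q W : {set P}) (lC : seq (conf P)) x sg :
  (forall c, c \in lC <-> in_component (restrT Q T) (restr Q rho) c) ->
  (forall b, reach (restrT Q T) (restr Q rho) b -> reach (restrT Q T) b (restr Q rho)) ->
  Q \subset W -> restr Q x \in lC -> word_in T sg -> ok (map (rt W) sg) (restr W x) ->
  (forall p, p \notin W -> fires (map (rt W) sg) (restr W x) p = 0) /\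
  restr Q (fires (map (rt W) sg) (restr W x)) \in lC.
Proof.
move=> HC Hbot HQW Hx Hw Ho; split.
  move=> p Hp; rewrite -(fires_supp sg (restr_restr _ (subxx W))) ffunE.
  by rewrite (negbTE Hp).
have [Ho' Hf] := ok_restr HQW Ho.
rewrite Hf; apply: (Cq_reach HC Hbot Hx).
rewrite restr_restr //; exists (map (rt Q) sg); split; first exact: word_map.
by apply/runE; rewrite restr_restr in Ho'.
Qed.
Lemma main_ind (P : finType) (T : net P) (rho : conf P) (Q : {set P}) (lC : seq (conf P)) :
  (forall c, c \in lC <-> in_component (restrT Q T) (restr Q rho) c) ->
  (forall b, reach (restrT Q T) (restr Q rho) b -> reach (restrT Q T) b (restr Q rho)) ->
  forall (k : nat) (W : {set P}) (x : conf P), Q \subset W -> #|W :\: Q| = k -> restr Q x \in lC ->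
  exists sg, word_in T sg /\
    size sg <= k * size lC * (1 + size lC * tnorm T + cnorm rho) ^ (k ^ k) /\
    ok (map (rt W) sg) (restr W x) /\
    ((forall p, p \in W -> p \notin Q ->
        rho p + size lC * tnorm T + 1 <= fires (map (rt W) sg) (restr W x) p) \/
     exists (R : {set P}) (n : nat), Q \proper R /\ R \subset W /\
       bottom (restrT R T) (restr R (fires (map (rt W) sg) (restr W x))) /\
       component_card (restrT R T) (restr R (fires (map (rt W) sg) (restr W x))) n /\
       n <= k * size lC * (1 + size lC * tnorm T + cnorm rho) ^ (k ^ k)).
Proof.
move=> HC Hbot.
set s := size lC; set tau := tnorm T; set X := 1 + s * tau + cnorm rho.
have X1 : 1 + s * tau <= X by rewrite /X; lia.
have X0 : 0 < X by lia.
elim=> [|k IH] W x HQW HWk Hx.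
  exists [::]; split => //; split => //; split => //; left => p HpW HpQ.
  have : p \in W :\: Q by rewrite inE HpQ HpW.
  by move/eqP: HWk; rewrite cards_eq0 => /eqP ->; rewrite inE.
set H := X ^ ((k + 1) ^ k).
set x0 := restr W x.
pose Big (z : conf P) := [exists p in W :\: Q, H <= z p].
have Hgood := fun sg => @good_conf P T rho Q W lC x sg HC Hbot HQW Hx.
have [l [Hsl Hl]] := box_list Q W lC H.
have Hsl' : size l = s * X ^ ((k.+1) ^ (k.+1)) by rewrite Hsl HWk -addn1 expH.
have HA := arithA k X1.
have Hkk : X ^ (k ^ k) <= X ^ (k.+1 ^ k.+1) by rewrite leq_pexp2l // -addn1 kk_le.
case: (classic (exists sg, word_in T sg /\ ok (map (rt W) sg) x0 /\ Big (fires (map (rt W) sg) x0))).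
- case=> sg [Hw [Ho HB]].
  set sw := map (rt W) sg.
  have Hex : exists i, (i <= size sw) && Big (fires (take i sw) x0).
    by exists (size sw); rewrite leqnn take_size.
  case: (ex_minnP Hex) => i0 /andP [Hi0 HB0] Hmin.
  have Hokt : forall j, ok (map (rt W) (take j sg)) x0 by move=> j; rewrite map_take ok_take.
  set z0 := fires (take i0 sw) x0.
  have Hz0eq : z0 = fires (map (rt W) (take i0 sg)) x0 by rewrite /z0 /sw map_take.
  have Hpre : forall j, j <= size (take i0 sw) -> fires (take j (take i0 sw)) x0 \in z0 :: l.
    move=> j; rewrite size_takel // => Hj; rewrite take_takel // inE.
    case: (ltnP j i0) => Hji; last first.
      have -> : j = i0 by apply/eqP; rewrite eqn_leq Hj Hji.
      by rewrite eqxx.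
    apply/orP; right.
    have HnB : ~~ Big (fires (take j sw) x0).
      apply/negP => Hb; have := Hmin j; rewrite Hb (leq_trans (ltnW Hji) Hi0) => /(_ isT); lia.
    have [Hs Hq] := Hgood (take j sg) (word_take j Hw) (Hokt j).
    rewrite /sw -map_take in HnB *; apply: Hl => // p Hp; rewrite ltnNge; apply/negP => Hh.
    by apply: (negP HnB); apply/existsP; exists p; rewrite Hp Hh.
  have [sg1' [Hsub1 [Ho1 [Hf1 Hsz1]]]] := pigeon_short (leqnn _) (ok_take i0 Ho) Hpre.
  have Hw1' : word_in (restrT W T) sg1'.
    apply/allP => t /Hsub1 /mem_take Ht; move/allP: (word_map W Hw); exact.
  case: (word_unmap Hw1') => sg1 [Hw1 Esg1]; subst sg1'.
  move/existsP: HB0 => [p /andP [HpD HpH]].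
  have HpW : p \in W by move: HpD; rewrite inE => /andP [].
  have HpQ : p \notin Q by move: HpD; rewrite inE => /andP [].
  set W' := W :\ p.
  have HQW' : Q \subset W'.
    apply/subsetP => q Hq; rewrite !inE (subsetP HQW q Hq) andbT.
    by apply/eqP => Hqp; move: HpQ; rewrite -Hqp Hq.
  have HW'k : #|W' :\: Q| = k.
    have -> : W' :\: Q = (W :\: Q) :\ p by apply/setP => q; rewrite !inE; case: (q == p); case: (q \in Q).
    by move: HWk; rewrite (cardsD1 p) HpD add1n => [[]].
  have [_ Hz0] := Hgood (take i0 sg) (word_take i0 Hw) (Hokt i0).
  rewrite -Hz0eq in Hz0.
  have [sg2 [Hw2 [Hs2 [Ho2 Hd2]]]] := IH W' z0 HQW' HW'k Hz0.
  have HW'W : W' \subset W by apply: subsetDl.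
  have Hsupp : restr W z0 = z0 by rewrite Hz0eq fires_supp // /x0 restr_restr.
  have Htau2 : tau * size sg2 <= tau * (k * s * X ^ (k ^ k)) by rewrite leq_mul2l Hs2 orbT.
  have Hlow' : forall q, q \in W -> q \notin W' -> tnorm T * size sg2 <= z0 q.
    move=> q HqW HqW'; have -> : q = p by move: HqW'; rewrite !inE HqW andbT negbK => /eqP.
    apply: leq_trans HpH; apply: leq_trans HA; exact: (leq_trans Htau2 (leq_addl _ _)).
  have [Ho2W Hlow] := lift HW'W Hsupp Hw2 Ho2 Hlow'.
  have [_ Hres] := ok_restr HW'W Ho2W.
  exists (sg1 ++ sg2); split; first by rewrite /word_in all_cat; apply/andP.
  split.
    rewrite size_cat; rewrite /= Hsl' ltnS size_map in Hsz1.
    have : k * s * X ^ (k ^ k) <= k * s * X ^ (k.+1 ^ k.+1) by rewrite leq_mul2l Hkk orbT.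
    move: Hs2 Hsz1; move: (X ^ (k ^ k)) (X ^ (k.+1 ^ k.+1)) => A B.
    have -> : k.+1 * s * B = s * B + k * s * B by rewrite mulSn mulnDl.
    move=> H2 H1 H3; apply: leq_add => //; exact: leq_trans H2 H3.
  have Hf1' : fires (map (rt W) sg1) x0 = z0 by rewrite Hf1.
  rewrite map_cat ok_cat Ho1 fires_cat Hf1' Ho2W; split => //.
  case: Hd2 => [Hleft|[R [n [HQR [HRW' [Hbt [Hcc Hn]]]]]]].
  + left => q HqW HqQ.
    case Hqp: (q == p).
      move/eqP: Hqp => ->; have := Hlow p HpW; rewrite !inE eqxx /= => /(_ isT).
      have Hc : rho p + s * tau + 1 <= X by rewrite /X; apply: ar1; exact: cnorm_le.
      move=> Hl2; exact: (ar2 Hc HA Htau2 HpH Hl2).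
    have HqW' : q \in W' by rewrite !inE Hqp HqW.
    have := Hleft q HqW' HqQ; rewrite -Hres ffunE HqW'; exact.
  + right; exists R, n; split => //; split; first exact: subset_trans HRW' HW'W.
    rewrite -(restr_restr _ HRW') Hres; split => //; split => //.
    apply: leq_trans Hn _; apply: leq_mul => //; by rewrite leq_mul2r leqnSn orbT.
- move=> HnA.
  have Hall : forall z, reach (restrT W T) x0 z -> z \in l.
    move=> z [sw [Hsw /runE [Ho Hf]]]; case: (word_unmap Hsw) => sg [Hw Esw]; subst sw.
    have [Hs Hq] := Hgood sg Hw Ho; rewrite -Hf; apply: Hl => // p Hp.
    rewrite ltnNge; apply/negP => Hh; apply: HnA; exists sg; split => //; split => //.
    by apply/existsP; exists p; rewrite Hp Hh.
  have [y [Hxy Hb]] := bottom_exists Hall.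
  have [n [Hn [Hbt Hcc]]] := bottom_card Hall Hxy Hb.
  have [sw1 [Hsw1 [/runE [Ho Hf] Hsz]]] := short_reach Hall Hxy.
  case: (word_unmap Hsw1) => sg [Hw Esw]; subst sw1.
  exists sg; split => //; split.
    rewrite Hsl' size_map in Hsz; apply: leq_trans (ltnW Hsz) _.
    by rewrite -mulnA leq_pmull.
  split => //; right; exists W, n; split.
    rewrite properE HQW /=; apply/negP => /subsetP HWQ.
    have : W :\: Q != set0 by rewrite -card_gt0 HWk.
    case/set0Pn => p; rewrite inE => /andP [HpQ HpW]; have := HWQ p HpW; by rewrite (negbTE HpQ).
  split => //; rewrite fires_supp ?/x0 ?restr_restr // Hf; split => //; split => //.
  apply: leq_trans Hn _; by rewrite Hsl' -mulnA leq_pmull.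
Qed.
Theorem lemma6p2 (P : finType) (T : net P) (rho : conf P) (Q : {set P}) (s : nat) :
  bottom (restrT Q T) (restr Q rho) ->
  component_card (restrT Q T) (restr Q rho) s ->
  let d := #|~: Q| in
  let B := (1 + d * (1 + s * tnorm T + cnorm rho) ^ (d ^ d)) * s in
  exists (sigma : seq (trans P)) (rho' : conf P),
    word_in T sigma /\ size sigma <= B /\ run sigma rho rho' /\
    ( (restr Q rho' = restr Q rho /\ (forall p, p \notin Q -> rho p < rho' p))
      \/
      (exists (Q' : {set P}) (s' : nat), Q \proper Q' /\
         bottom (restrT Q' T) (restr Q' rho') /\
         component_card (restrT Q' T) (restr Q' rho') s' /\ s' <= B) ).
Proof.
move=> [_ Hbot] [lC [Huniq [Hsize HC]]] d B.
have Hx : restr Q rho \in lC by apply/HC; split; apply: reach_refl.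
have Hcard : #|[set: P] :\: Q| = d by rewrite setTD.
have [sg [Hw [Hs [Ho Hd]]]] := main_ind HC Hbot (subsetT Q) Hcard Hx.
rewrite map_rt_setT restr_setT in Ho Hd.
rewrite Hsize in Hs Hd.
set X := 1 + s * tnorm T + cnorm rho in Hs Hd.
have HB1 : d * s * X ^ (d ^ d) <= B.
  rewrite /B mulnDl mul1n mulnAC; exact: leq_addl.
set y := fires sg rho.
case: Hd => [Hleft|[R [n [HQR [_ [Hbt [Hcc Hn]]]]]]]; last first.
  exists sg, y; split => //; split; first exact: leq_trans Hs HB1.
  split; first by apply/runE.
  right; exists R, n; split => //; split => //; split => //.
  exact: leq_trans Hn HB1.
have Ho' : ok (map (rt setT) sg) (restr setT rho) by rewrite map_rt_setT restr_setT.
have [_ Hy] := @good_conf P T rho Q setT lC rho sg HC Hbot (subsetT Q) Hx Hw Ho'.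
rewrite map_rt_setT restr_setT -/y in Hy.
have Hreach : reach (restrT Q T) (restr Q y) (restr Q rho) by have [_] := (HC _).1 Hy.
have Hall : forall z, reach (restrT Q T) (restr Q y) z -> z \in lC.
  by move=> z; apply: (Cq_reach HC Hbot Hy).
have [sw3 [Hsw3 [/runE [Ho3 Hf3] Hsz3]]] := short_reach Hall Hreach.
case: (word_unmap Hsw3) => sg3 [Hw3 Esw]; subst sw3.
rewrite size_map Hsize in Hsz3.
have Htau : tnorm T * size sg3 <= s * tnorm T.
  by rewrite mulnC leq_mul2r (ltnW Hsz3) orbT.
have Hbound : forall p, p \in [set: P] -> p \notin Q -> tnorm T * size sg3 <= y p.
  move=> p HpT HpQ; exact: (ar3 Htau (Hleft p HpT HpQ)).
have Hysupp : restr [set: P] y = y by rewrite restr_setT.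
have [Ho3T Hlow] := lift (subsetT Q) Hysupp Hw3 Ho3 Hbound.
have [_ Hres] := ok_restr (subsetT Q) Ho3T.
rewrite map_rt_setT in Ho3T Hlow Hres.
exists (sg ++ sg3), (fires sg3 y); split; first by rewrite /word_in all_cat; apply/andP.
split.
  rewrite size_cat; apply: leq_trans (leq_add Hs (ltnW Hsz3)) _ .
  rewrite /B mulnDl mul1n mulnAC addnC; exact: leqnn.
split; first by apply/runE; rewrite ok_cat Ho Ho3T fires_cat.
left; split; first by rewrite Hres Hf3.
move=> p HpQ; exact: (ar4 Htau (Hleft p (in_setT p) HpQ) (Hlow p (in_setT p) HpQ)).
Qed.
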